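(* Let $\mathcal{A}$ be a nonnegative weakly irreducible tensor of order $m$ and dimension $n$ which is spectral $\ell$-symmetric. Then $(\mathbb{P}\mathbb{V},\circ)$ is an abelian group which contains $\mathbb{P}\mathbb{V}_0$ as a subgroup and $\mathbb{P}\mathbb{V}_j$ as a coset of $\mathbb{P}\mathbb{V}_0$ for each $j\in[\ell-1]$, and the map $\Psi:\mathbb{P}\mathbb{V}\to\mathfrak{D}$, $y\mapsto D_y$, is a group isomorphism which sends $\mathbb{P}\mathbb{V}_j$ onto $\mathfrak{D}^{(j)}$ for $j=0,1,\ldots,\ell-1$.
   Context: Tensors: order $m$, dimension $n$, entries $a_{i_1\cdots i_m}$, $i_k\in[n]$. For $x\in\mathbb{C}^n$, $(\mathcal{A}x^{m-1})_i=\sum_{i_2,\dots,i_m}a_{ii_2\cdots i_m}x_{i_2}\cdots x_{i_m}$, $x^{[m-1]}=(x_i^{m-1})_i$; $\lambda$ is an eigenvalue with eigenvector $x\ne0$ if $\mathcal{A}x^{m-1}=\lambda x^{[m-1]}$. Spectrum $\mathrm{Spec}(\mathcal{A})$: multiset of roots of $\det(\lambda\mathcal{I}-\mathcal{A})$ (resultant-based characteristic polynomial); $\rho(\mathcal{A})$: largest modulus of an eigenvalue. Weakly irreducible: the digraph on $[n]$ with arc $(i,j)$ whenever some $a_{ii_2\cdots i_m}\neq0$ with $j\in\{i_2,\dots,i_m\}$ is strongly connected. Spectral $\ell$-symmetric: $\mathrm{Spec}(\mathcal{A})=e^{\mathrm{i}2\pi/\ell}\mathrm{Spec}(\mathcal{A})$.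 For diagonal $P,Q$, $(P\mathcal{A}Q)_{i_1\cdots i_m}=p_{i_1}a_{i_1\cdots i_m}q_{i_2}\cdots q_{i_m}$. $\mathfrak{D}^{(j)}$ ($j=0,\dots,\ell-1$) is the set of invertible diagonal $D$ with $d_{11}=1$ and $\mathcal{A}=e^{-\mathrm{i}2\pi j/\ell}D^{-(m-1)}\mathcal{A}D$, and $\mathfrak{D}=\bigcup_j\mathfrak{D}^{(j)}$. Known facts: for nonnegative weakly irreducible $\mathcal{A}$, $\rho(\mathcal{A})$ is an eigenvalue with a positive eigenvector unique up to scaling, and every eigenvector for an eigenvalue of modulus $\rho(\mathcal{A})$ has no zero entries. Let $\lambda_j=\rho(\mathcal{A})e^{\mathrm{i}2\pi j/\ell}$ and let $\mathbb{P}\mathbb{V}_j$ be the set of eigenvectors $y$ of $\mathcal{A}$ for $\lambda_j$ normalized so that $y_1=1$ (one representative per projective eigenvector); $\mathbb{P}\mathbb{V}=\bigcup_{j=0}^{\ell-1}\mathbb{P}\mathbb{V}_j$. Let $v_p\in\mathbb{P}\mathbb{V}_0$ be the positive one. For $y\in\mathbb{P}\mathbb{V}$, $D_y=\mathrm{diag}(y_1/|y_1|,\dots,y_n/|y_n|)$, and $y\circ\hat y:=D_yD_{\hat y}v_p$. *)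

(* Defs.v *)
From HB Require Import structures.
From mathcomp Require Import all_boot all_order all_algebra.
From mathcomp Require Import reals trigo.
From mathcomp Require Import complex.
Set Implicit Arguments. Unset Strict Implicit. Unset Printing Implicit Defensive.
Import Order.TTheory GRing.Theory Num.Theory.
Local Open Scope ring_scope.

Section Tensors.
Variable R : realType.
Local Notation C := R[i].

Definition expi (theta : R) : C := Complex (cos theta) (sin theta).

Definition rootu (l : nat) (j : int) : C := expi (2 * pi * j%:~R / l%:R).

Variables (m n : nat).
(* A tensor of order m and dimension n.+1 : entry a_{i i_2 ... i_m} is
   A i [tuple i_2; ...; i_m]. *)
Definition tensor := 'I_n.+1 -> (m.-1).-tuple 'I_n.+1 -> C.
Definition vect := 'cV[C]_n.+1.

Implicit Types (A : tensor) (x y : vect) (D P Q : 'M[C]_n.+1).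

Definition tapply A x (i : 'I_n.+1) : C :=
  \sum_(t : (m.-1).-tuple 'I_n.+1) A i t * \prod_(s <- t) x s 0.

Definition eigenpair A (lam : C) x : Prop :=
  x != 0 /\ forall i, tapply A x i = lam * x i 0 ^+ (m.-1).

Definition eigenvalue A (lam : C) : Prop := exists x, eigenpair A lam x.

Definition is_spectral_radius A (rho : C) : Prop :=
  (exists2 lam, eigenvalue A lam & `|lam| = rho) /\
  (forall lam, eigenvalue A lam -> `|lam| <= rho).

Definition nonneg_tensor A : Prop := forall i t, 0 <= A i t.

Definition tensor_digraph A : rel 'I_n.+1 :=
  fun i j => [exists t : (m.-1).-tuple 'I_n.+1, (A i t != 0) && (j \in t)].

Definition weakly_irreducible A : Prop :=
  forall i j, connect (tensor_digraph A) i j.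

(* Spec(A) = e^{i 2 pi / l} Spec(A), spectrum taken as the set of eigenvalues *)
Definition spectral_symmetric A (l : nat) : Prop :=
  forall mu, eigenvalue A mu <-> exists2 lam, eigenvalue A lam & mu = rootu l 1 * lam.

Definition tmul P A Q : tensor :=
  fun i t => P i i * A i t * \prod_(s <- t) Q s s.

Definition frakD A (l j : nat) D : Prop :=
  [/\ is_diag_mx D, D \in unitmx, D ord0 ord0 = 1 &
      forall i t, A i t =
        rootu l (- j%:Z) * tmul ((invmx D) ^+ (m.-1)) A D i t].

Definition frakD_all A (l : nat) D : Prop := exists2 j, (j < l)%N & frakD A l j D.

Definition lambda_j (rho : C) (l j : nat) : C := rho * rootu l j%:Z.

Definition PVj A (rho : C) (l j : nat) y : Prop :=
  eigenpair A (lambda_j rho l j) y /\ y ord0 0 = 1.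

Definition PV A (rho : C) (l : nat) y : Prop := exists2 j, (j < l)%N & PVj A rho l j y.

Definition Dmat y : 'M[C]_n.+1 := diag_mx (\row_i (y i 0 / `|y i 0|)).

Definition circ (vp y yhat : vect) : vect := Dmat y *m Dmat yhat *m vp.

End Tensors.

(* Main.v *)
Require Import Defs.
From HB Require Import structures.
From mathcomp Require Import all_boot all_order all_algebra.
From mathcomp Require Import reals trigo.
From mathcomp Require Import complex.
Import Order.TTheory GRing.Theory Num.Theory.
Local Open Scope ring_scope.
From mathcomp Require Import ring.
Set Implicit Arguments. Unset Strict Implicit. Unset Printing Implicit Defensive.

Section Trig.
Variable R : realType.
Local Notation C := R[i].

Lemma expiD (a b : R) : expi (a + b) = expi a * expi b.
Proof. by rewrite /expi cosD sinD; simpc; rewrite (addrC (sin a * cos b)). Qed.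

Lemma expi0 : expi (0 : R) = 1.
Proof. by rewrite /expi cos0 sin0. Qed.

Lemma norm_expi (a : R) : `|expi a| = 1.
Proof. by rewrite normc_def /= cos2Dsin2 sqrtr1. Qed.

Lemma rootuD l (a b : int) : rootu R l (a + b) = rootu R l a * rootu R l b.
Proof. by rewrite /rootu -expiD intrD mulrDr mulrDl. Qed.

Lemma rootu0 l : rootu R l 0 = 1.
Proof. by rewrite /rootu mulr0 mul0r expi0. Qed.

Lemma norm_rootu l a : `|rootu R l a| = 1.
Proof. exact: norm_expi. Qed.

Lemma rootu_neq0 l a : rootu R l a != 0.
Proof. by rewrite -normr_eq0 norm_rootu oner_eq0. Qed.

Lemma rootuN l a : rootu R l (- a) = (rootu R l a)^-1.
Proof.
apply: (mulIf (rootu_neq0 l a)); rewrite -rootuD addNr rootu0 mulVf //.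
exact: rootu_neq0.
Qed.

Lemma rootu_l l : (0 < l)%N -> rootu R l l = 1.
Proof.
move=> l0; rewrite /rootu mulfK; last by rewrite pnatr_eq0 -lt0n.
by rewrite /expi mulr_natl cos2pi sin2pi.
Qed.

Lemma rootu_mull l (q : int) : (0 < l)%N -> rootu R l (l%:Z * q) = 1.
Proof.
move=> l0.
have Hn : forall k : nat, rootu R l (l%:Z * k%:Z) = 1.
  elim=> [|k IH]; first by rewrite mulr0 rootu0.
  by rewrite -addn1 PoszD mulrDr mulr1 rootuD IH rootu_l // mul1r.
case: q => k; first exact: Hn.
by rewrite NegzE mulrN rootuN Hn invr1.
Qed.

End Trig.

Lemma prod_const_seq (R : comNzRingType) (T : Type) (t : seq T) (a : R) :
  \prod_(s <- t) a = a ^+ size t.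
Proof. by elim: t => [|x t IH]; rewrite ?big_nil ?big_cons ?IH ?exprS. Qed.

Lemma prod_eq_le (R : numDomainType) (T : eqType) (f g : T -> R) (t : seq T) :
  (forall s, 0 <= f s <= g s) -> (forall s, 0 < g s) ->
  \prod_(s <- t) f s = \prod_(s <- t) g s -> forall k, k \in t -> f k = g k.
Proof.
move=> Hfg Hg; elim: t => [|x t IH] //; rewrite !big_cons => E k.
have Pg : 0 < \prod_(s <- t) g s by apply: prodr_gt0.
have Pfg : \prod_(s <- t) f s <= \prod_(s <- t) g s by apply: ler_prod.
have hx : f x = g x.
  case: (eqVneq (f x) (g x)) => // ne.
  have lt : f x < g x by rewrite lt_neqAle ne (andP (Hfg x)).2.
  have : f x * \prod_(s <- t) f s < g x * \prod_(s <- t) g s.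
    apply: (le_lt_trans (ler_wpM2l (andP (Hfg x)).1 Pfg)).
    by rewrite ltr_pM2r.
  by rewrite E ltxx.
rewrite inE => /orP[/eqP->//|kt].
apply: IH => //; apply: (mulfI (x := g x)); first by rewrite gt_eqF.
by rewrite -{1}hx.
Qed.

Lemma connect_ind (T : finType) (e : rel T) (P : T -> Prop) :
  (forall x y, P x -> e x y -> P y) -> forall x y, connect e x y -> P x -> P y.
Proof.
move=> H x y /connectP [p]; elim: p x => [|a p IH] x /=; first by move=> _ ->.
by case/andP=> exa pa Ey Px; exact: (IH a pa Ey (H _ _ Px exa)).
Qed.

Section Key.
Variable R : realType.
Local Notation C := R[i].
Variables (m n l : nat) (A : tensor R m n) (rho : C) (vp : vect R n).
Hypothesis Hnn : nonneg_tensor A.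
Hypothesis Hirr : weakly_irreducible A.
Hypothesis Hrho : 0 <= rho.
Hypothesis Hvp : forall i, tapply A vp i = rho * vp i 0 ^+ m.-1.
Hypothesis Hvpos : forall i, 0 < vp i 0.

Local Notation v i := (vp i 0).

Lemma vp_neq0 i : v i != 0. Proof. by rewrite gt_eqF. Qed.

Lemma prod_scale (c : C) (f : 'I_n.+1 -> C) (t : (m.-1).-tuple 'I_n.+1) :
  \prod_(s <- t) (c * f s) = c ^+ m.-1 * \prod_(s <- t) f s.
Proof. by rewrite big_split /= prod_const_seq size_tuple. Qed.

Lemma key_abs (w : C) (y : vect R n) : `|w| = 1 -> y != 0 ->
  (forall i, tapply A y i = rho * w * y i 0 ^+ m.-1) ->
  exists2 c, 0 < c & forall i, `|y i 0| = c * v i.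
Proof.
move=> w1 y0 Hy.
pose z i := `|y i 0|.
have Hz i : rho * z i ^+ m.-1 <= \sum_t A i t * \prod_(s <- t) z s.
  have -> : rho * z i ^+ m.-1 = `|tapply A y i|.
    by rewrite Hy !normrM w1 mulr1 normrX ger0_norm.
  apply: (le_trans (ler_norm_sum _ _ _)); apply: ler_sum => t _.
  by rewrite normrM normr_prod ger0_norm.
pose f i := z i / v i.
have f0 i : 0 <= f i by rewrite divr_ge0 ?normr_ge0 // ltW.
have [i0 _ Hmax] := @real_arg_maxP _ _ ord0 xpredT f isT (fun i _ => ger0_real (f0 i)).
set c := f _ in Hmax.
have c0 : 0 <= c by exact: f0.
have Hle i : z i <= c * v i.
  have := ler_wpM2r (ltW (Hvpos i)) (Hmax i isT); rewrite /f divfK //; exact: vp_neq0.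
have Hcl : forall i k, z i = c * v i -> tensor_digraph A i k -> z k = c * v k.
  move=> i k Ei /existsP [t /andP [Ant kt]].
  have [c00|cpos] := eqVneq c 0.
    apply/eqP; rewrite eq_le Hle /= c00 mul0r /z normr_ge0 //.
  have cp : 0 < c by rewrite lt_neqAle eq_sym cpos c0.
  pose F u := A i u * \prod_(s <- u) (c * v s) - A i u * \prod_(s <- u) z s.
  have F0 u : 0 <= F u.
    rewrite subr_ge0 ler_wpM2l //; apply: ler_prod => s _.
    by rewrite normr_ge0 Hle.
  have SF : \sum_u F u = 0.
    apply/eqP; rewrite eq_le sumr_ge0 ?andbT //.
    rewrite sumrB subr_le0.
    have -> : \sum_t A i t * \prod_(s <- t) (c * v s) = rho * z i ^+ m.-1.
      under eq_bigr => s _ do rewrite prod_scale mulrCA.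
      by rewrite -mulr_sumr -/(tapply A vp i) Hvp Ei exprMn mulrCA -!exprMn.
    exact: Hz.
  have := psumr_eq0P (fun t _ => F0 t) SF (i := t) isT.
  move/eqP; rewrite /F subr_eq0 => /eqP /(mulfI Ant) E.
  apply: (prod_eq_le (f := z) (g := fun s => c * v s) _ _ (esym E) kt).
  - by move=> s; rewrite normr_ge0 Hle.
  - by move=> s; rewrite mulr_gt0.
have Hall k : z k = c * v k.
  apply: (connect_ind (P := fun i => z i = c * v i) Hcl (Hirr i0 k)).
  by rewrite /c /f divfK //; exact: vp_neq0.
exists c => //.
have [k yk] : exists k, y k 0 != 0.
  case: (boolP [exists k, y k 0 != 0]) => [/existsP[k yk]|/existsPn H].
    by exists k.
  case/negP: y0; apply/eqP/matrixP => i j; rewrite (ord1 j) mxE.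
  by have := H i; rewrite negbK => /eqP.
rewrite lt_neqAle c0 andbT; apply/eqP => c00.
by move: (Hall k); rewrite -c00 mul0r /z => /eqP; rewrite normr_eq0 (negPf yk).
Qed.


Lemma phase (w : C) (y : vect R n) : `|w| = 1 ->
  (forall i, tapply A y i = rho * w * y i 0 ^+ m.-1) ->
  (forall i, `|y i 0| = v i) ->
  forall i t, A i t != 0 ->
  \prod_(s <- t) (y s 0 / `|y s 0|) = w * (y i 0 / `|y i 0|) ^+ m.-1.
Proof.
move=> w1 Hy Hyv i t Ant.
pose d s := y s 0 / v s.
have yd s : y s 0 = d s * v s by rewrite /d divfK ?vp_neq0.
have d1 s : `|d s| = 1.
  by rewrite /d normf_div Hyv (gtr0_norm (Hvpos s)) divff ?vp_neq0.
have -> : \prod_(s <- t) (y s 0 / `|y s 0|) = \prod_(s <- t) d s.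
  by apply: eq_bigr => s _; rewrite Hyv.
rewrite Hyv -/(d i).
pose u := w * d i ^+ m.-1.
have u1 : `|u| = 1 by rewrite normrM w1 normrX d1 expr1n mulr1.
have u0 : u != 0 by rewrite -normr_eq0 u1 oner_eq0.
have Hle : forall t, xpredT t ->
    `|A i t * \prod_(s <- t) y s 0 / u| <= A i t * \prod_(s <- t) v s.
  move=> t' _; rewrite normf_div u1 divr1 normrM normr_prod ger0_norm //.
  by under eq_bigr => s _ do rewrite Hyv.
have HS : \sum_t (A i t * \prod_(s <- t) y s 0 / u) =
          \sum_t A i t * \prod_(s <- t) v s.
  rewrite -mulr_suml -/(tapply A y i) -/(tapply A vp i) Hy Hvp yd exprMn /u.
  field; apply/andP; split; [rewrite expf_neq0 // |]; by rewrite -normr_eq0 ?d1 ?w1 oner_eq0.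
have HF := normC_sum_upper Hle HS (i := t) isT.
rewrite (eq_bigr (fun s => d s * v s)) in HF; last by move=> s _; rewrite yd.
rewrite big_split /= in HF.
have Pv : \prod_(s <- t) v s != 0 by rewrite gt_eqF // prodr_gt0.
have HF' : A i t * (\prod_(s <- t) d s * \prod_(s <- t) v s) =
           A i t * \prod_(s <- t) v s * u by rewrite -HF divfK.
apply: (mulIf Pv); apply: (mulfI Ant); rewrite HF'.
by rewrite mulrAC -mulrA.
Qed.

Hypothesis Hv0 : v ord0 = 1.

Definition yv (d : 'I_n.+1 -> C) : vect R n := \col_i (d i * v i).
Definition dg (d : 'I_n.+1 -> C) : 'M[C]_n.+1 := diag_mx (\row_i d i).
Definition Phase (j : int) (d : 'I_n.+1 -> C) :=
  forall i t, A i t != 0 -> \prod_(s <- t) d s = rootu R l j * d i ^+ m.-1.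
Definition Good (j : int) (d : 'I_n.+1 -> C) :=
  [/\ forall i, `|d i| = 1, d ord0 = 1 & Phase j d].

Lemma tapply_yv j d : Phase j d ->
  forall i, tapply A (yv d) i = rho * rootu R l j * (yv d) i 0 ^+ m.-1.
Proof.
move=> Hd i; rewrite /tapply.
have E t : A i t * \prod_(s <- t) yv d s 0 =
    rootu R l j * d i ^+ m.-1 * (A i t * \prod_(s <- t) v s).
  rewrite (eq_bigr (fun s => d s * v s)); last by move=> s _; rewrite mxE.
  rewrite big_split /=; case: (eqVneq (A i t) 0) => [->|Ant].
    by rewrite !mul0r mulr0.
  by rewrite (Hd i t Ant) mulrCA.
rewrite (eq_bigr _ (fun t _ => E t)) -mulr_sumr -/(tapply A vp i) Hvp mxE exprMn.
ring.
Qed.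

Lemma yv_neq0 d : d ord0 = 1 -> yv d != 0.
Proof.
move=> Hd; apply/eqP => E; move: (vp_neq0 ord0).
have := congr1 (fun M : 'M_(n.+1, 1) => M ord0 0) E.
by rewrite /= !mxE Hd mul1r => ->; rewrite eqxx.
Qed.

Lemma Good_PVj (j : nat) d : Good j d -> PVj A rho l j (yv d).
Proof.
case=> _ d0 Hp; split; last by rewrite mxE d0 Hv0 mul1r.
split; first exact: yv_neq0.
by move=> i; rewrite /lambda_j (tapply_yv Hp).
Qed.

Lemma Dmat_yv d : (forall i, `|d i| = 1) -> Dmat (yv d) = dg d.
Proof.
move=> H; rewrite /Dmat /dg; congr diag_mx; apply/rowP => i.
by rewrite !mxE normrM H mul1r gtr0_norm // mulfK // vp_neq0.
Qed.

Lemma dg_vp d : dg d *m vp = yv d.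
Proof. by apply/matrixP => i k; rewrite (ord1 k) mul_diag_mx !mxE. Qed.

Lemma PVj_Good (j : nat) y : PVj A rho l j y -> exists d, Good j d /\ y = yv d.
Proof.
case=> [[y0 Hy] y1].
have Hy' i : tapply A y i = rho * rootu R l j * y i 0 ^+ m.-1 by rewrite Hy.
have [c c0 Hc] := key_abs (norm_rootu _ _ _) y0 Hy'.
have c1 : c = 1 by move: (Hc ord0); rewrite y1 normr1 Hv0 mulr1.
have Hyv i : `|y i 0| = v i by rewrite Hc c1 mul1r.
exists (fun s => y s 0 / `|y s 0|); split.
  split.
  - by move=> i; rewrite normf_div normr_id divff // Hyv vp_neq0.
  - by rewrite y1 normr1 divr1.
  - by move=> i t Ant; exact: (phase (norm_rootu _ _ _) Hy' Hyv Ant).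
apply/matrixP => i k; rewrite (ord1 k) mxE Hyv divfK //; exact: vp_neq0.
Qed.

Lemma circ_yv d e : (forall i, `|d i| = 1) -> (forall i, `|e i| = 1) ->
  circ vp (yv d) (yv e) = yv (fun i => d i * e i).
Proof.
move=> d1 e1; rewrite /circ !Dmat_yv // mulmx_diag -dg_vp /dg.
by congr (diag_mx _ *m vp); apply/rowP => i; rewrite !mxE.
Qed.

Lemma Good_mul j k d e : Good j d -> Good k e -> Good (j + k) (fun i => d i * e i).
Proof.
case=> d1 d0 Hd [e1 e0 He]; split.
- by move=> i; rewrite normrM d1 e1 mulr1.
- by rewrite d0 e0 mulr1.
- by move=> i t Ant; rewrite big_split /= (Hd i t Ant) (He i t Ant) rootuD exprMn mulrACA.
Qed.

Lemma Good_inv j d : Good j d -> Good (- j) (fun i => (d i)^-1).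
Proof.
case=> d1 d0 Hd; split.
- by move=> i; rewrite normfV d1 invr1.
- by rewrite d0 invr1.
- by move=> i t Ant; rewrite prodfV (Hd i t Ant) rootuN exprVn invfM.
Qed.

Lemma Good_per j q d : (0 < l)%N -> Good j d -> Good (j + l%:Z * q) d.
Proof.
move=> l0 [d1 d0 Hd]; split => // i t Ant.
by rewrite (Hd i t Ant) rootuD rootu_mull // mulr1.
Qed.

Lemma Good_one : Good 0 (fun _ => 1).
Proof.
split => //; first by move=> i; rewrite normr1.
by move=> i t _; rewrite big1 // rootu0 expr1n mulr1.
Qed.

Lemma yv_one : yv (fun _ => 1) = vp.
Proof. by apply/matrixP => i k; rewrite (ord1 k) mxE mul1r. Qed.

Lemma Good_PV (j : int) d : (0 < l)%N -> Good j d -> PV A rho l (yv d).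
Proof.
move=> l0 Hg.
have lz : (0 < l%:Z)%R by rewrite ltz_nat.
pose k := `|(j %% l)%Z|%N.
have kE : k%:Z = (j %% l)%Z by rewrite /k gez0_abs // modz_ge0 // gt_eqF.
exists k; first by rewrite -ltz_nat kE ltz_pmod.
apply: Good_PVj; rewrite kE.
have -> : (j %% l)%Z = j + l%:Z * (- (j %/ l)%Z).
  by rewrite {2}(divz_eq j l); ring.
exact: Good_per.
Qed.

Lemma dg_inv d : (forall i, d i != 0) -> invmx (dg d) = dg (fun i => (d i)^-1).
Proof.
move=> dn.
have U : dg d \in unitmx.
  by rewrite unitmxE det_diag unitfE; apply/prodf_neq0 => i _; rewrite mxE.
have DE : dg d *m dg (fun i => (d i)^-1) = 1%:M.
  rewrite mulmx_diag -diag_const_mx; congr diag_mx; apply/rowP => i.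
  by rewrite !mxE mulfV.
by rewrite -[LHS]mulmx1 -DE mulmxA mulVmx // mul1mx.
Qed.

Lemma dg_exp d k : (dg d) ^+ k = dg (fun i => d i ^+ k).
Proof.
elim: k => [|k IH].
  rewrite expr0 /dg -[1]/(1%:M) -diag_const_mx; congr diag_mx.
  by apply/rowP => i; rewrite !mxE.
by rewrite exprS IH -mulmxE /dg mulmx_diag; congr diag_mx; apply/rowP => i; rewrite !mxE exprS.
Qed.

Lemma tmul_dg d : (forall i, d i != 0) -> forall i t,
  tmul (invmx (dg d) ^+ m.-1) A (dg d) i t =
  (d i)^-1 ^+ m.-1 * A i t * \prod_(s <- t) d s.
Proof.
move=> dn i t; rewrite /tmul dg_inv // dg_exp /dg.
congr (_ * _ * _); first by rewrite !mxE eqxx mulr1n.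
by apply: eq_bigr => s _; rewrite !mxE eqxx mulr1n.
Qed.

Lemma frak_eq (j : nat) d : (forall i, d i != 0) ->
  (forall i t, A i t = rootu R l (- j%:Z) * tmul (invmx (dg d) ^+ m.-1) A (dg d) i t)
  <-> Phase j d.
Proof.
move=> dn; split => H i t.
  move=> Ant; have E := H i t; rewrite tmul_dg // rootuN in E.
  apply: (mulfI Ant); rewrite [in RHS]E exprVn.
  have r0 := rootu_neq0 R l j; have di := dn i.
  field; by rewrite ?expf_neq0 ?r0 ?di.
rewrite tmul_dg // rootuN.
case: (eqVneq (A i t) 0) => [->|Ant]; first by rewrite !(mulr0, mul0r).
rewrite (H i t Ant) exprVn.
have r0 := rootu_neq0 R l j; have di := dn i.
field; by rewrite ?expf_neq0 ?r0 ?di.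
Qed.

Lemma frakD_Good (j : nat) D : frakD A l j D -> exists d, Good j d /\ D = dg d.
Proof.
case=> /diag_mxP [r ->] Du D00 Heq.
pose d i := r 0 i.
have Dd : diag_mx r = dg d by congr diag_mx; apply/rowP => i; rewrite mxE.
rewrite Dd in Du D00 Heq.
have dn i : d i != 0.
  move: Du; rewrite unitmxE det_diag unitfE => /prodf_neq0 H.
  by have := H i isT; rewrite mxE.
have Hp : Phase j d := (frak_eq j dn).1 Heq.
have d0 : d ord0 = 1 by move: D00; rewrite /dg !mxE eqxx mulr1n.
have [c c0 Hc] := key_abs (norm_rootu _ _ j) (yv_neq0 d0) (tapply_yv Hp).
have c1 : c = 1 by move: (Hc ord0); rewrite mxE d0 mul1r Hv0 normr1 mulr1.
exists d; split => //; split => // i.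
move: (Hc i); rewrite c1 mul1r mxE normrM (gtr0_norm (Hvpos i)).
by rewrite -{2}(mul1r (v i)) => /(mulIf (vp_neq0 i)).
Qed.

Lemma Good_frakD (j : nat) d : Good j d -> frakD A l j (dg d).
Proof.
case=> d1 d0 Hp.
have dn i : d i != 0 by rewrite -normr_eq0 d1 oner_eq0.
split.
- exact: diag_mx_is_diag.
- by rewrite unitmxE det_diag unitfE; apply/prodf_neq0 => i _; rewrite mxE.
- by rewrite /dg !mxE eqxx mulr1n.
- exact/(frak_eq j dn).
Qed.

Lemma tapply_scale (a : C) (x : vect R n) i :
  tapply A (a *: x) i = a ^+ m.-1 * tapply A x i.
Proof.
rewrite /tapply mulr_sumr; apply: eq_bigr => t _.
have -> : \prod_(s <- t) (a *: x) s 0 = \prod_(s <- t) (a * x s 0).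
  by apply: eq_bigr => s _; rewrite mxE.
by rewrite prod_scale mulrCA.
Qed.

Lemma PVj_exists (j : nat) : Defs.eigenvalue A (rho * rootu R l j) ->
  exists y, PVj A rho l j y.
Proof.
case=> x [x0 Hx].
have Hx' i : tapply A x i = rho * rootu R l j * x i 0 ^+ m.-1 := Hx i.
have [c c0 Hc] := key_abs (norm_rootu _ _ _) x0 Hx'.
have x00 : x ord0 0 != 0.
  by rewrite -normr_eq0 Hc mulf_eq0 negb_or (gt_eqF c0) (vp_neq0 ord0).
exists ((x ord0 0)^-1 *: x); split; [split|].
- by rewrite scaler_eq0 negb_or invr_eq0 x00.
- by move=> i; rewrite tapply_scale Hx' /lambda_j mxE exprMn mulrCA.
- by rewrite mxE mulVf.
Qed.


Lemma main_sec : (0 < l)%N -> spectral_symmetric A l -> PVj A rho l 0 vp ->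
  let PV := PV A rho l in
  let PV0 := PVj A rho l 0 in
  let o := circ vp in
  [/\ (forall y z, PV y -> PV z -> PV (o y z)),
      (forall x y z, PV x -> PV y -> PV z -> o x (o y z) = o (o x y) z),
      (forall y z, PV y -> PV z -> o y z = o z y) &
      exists e, [/\ PV e, (forall y, PV y -> o e y = y),
        (forall y, PV y -> exists2 z, PV z & o y z = e),
        [/\ (forall y, PV0 y -> PV y), PV0 e,
            (forall y z, PV0 y -> PV0 z -> PV0 (o y z)) &
            (forall y, PV0 y -> exists2 z, PV0 z & o y z = e)] &
        (forall j, (1 <= j <= l.-1)%N ->
           exists2 y, PV y &
             forall z, PVj A rho l j z <-> exists2 w, PV0 w & z = o y w)]] /\
  [/\ (forall y, PV y -> frakD_all A l (Dmat y)),
      (forall y z, PV y -> PV z -> Dmat y = Dmat z -> y = z),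
      (forall D, frakD_all A l D -> exists2 y, PV y & Dmat y = D),
      (forall y z, PV y -> PV z -> Dmat (o y z) = Dmat y *m Dmat z) &
      (forall j, (j < l)%N ->
         (forall y, PVj A rho l j y -> frakD A l j (Dmat y)) /\
         (forall D, frakD A l j D -> exists2 y, PVj A rho l j y & Dmat y = D))].
Proof.
move=> Hl Hsym Hvpe PV PV0 o.
have HPV y : PV y -> exists2 j, (j < l)%N & exists2 d, Good j d & y = yv d.
  by case=> j jl /PVj_Good [d [Gd ->]]; exists j => //; exists d.
have Hn j d : Good j d -> forall i, `|d i| = 1 by case.
have Hnz j d : Good j d -> forall i, d i != 0.
  by move=> Gd i; rewrite -normr_eq0 (Hn _ _ Gd) oner_eq0.
have Ho j k d e : Good j d -> Good k e -> o (yv d) (yv e) = yv (fun i => d i * e i).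
  by move=> Gd Ge; exact: circ_yv (Hn _ _ Gd) (Hn _ _ Ge).
have HvpPV : PV vp by exists 0%N.
have PVe : vp = yv (fun _ => 1) by rewrite yv_one.
split.
  split.
  - move=> y z /HPV [j _ [d Gd ->]] /HPV [k _ [e Ge ->]].
    rewrite (Ho _ _ _ _ Gd Ge); exact: Good_PV Hl (Good_mul Gd Ge).
  - move=> x y z /HPV [j _ [d Gd ->]] /HPV [k _ [e Ge ->]] /HPV [p _ [f Gf ->]].
    rewrite (Ho _ _ _ _ Ge Gf) (Ho _ _ _ _ Gd (Good_mul Ge Gf)).
    rewrite (Ho _ _ _ _ Gd Ge) (Ho _ _ _ _ (Good_mul Gd Ge) Gf).
    by apply/matrixP => i k'; rewrite !mxE mulrA.
  - move=> y z /HPV [j _ [d Gd ->]] /HPV [k _ [e Ge ->]].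
    rewrite (Ho _ _ _ _ Gd Ge) (Ho _ _ _ _ Ge Gd).
    by apply/matrixP => i k'; rewrite !mxE [d i * _]mulrC.
  exists vp; split.
  - exact: HvpPV.
  - move=> y /HPV [j _ [d Gd ->]].
    rewrite PVe (Ho _ _ _ _ Good_one Gd).
    by apply/matrixP => i k; rewrite !mxE mul1r.
  - move=> y /HPV [j _ [d Gd ->]]; exists (yv (fun i => (d i)^-1)).
      exact: Good_PV Hl (Good_inv Gd).
    rewrite (Ho _ _ _ _ Gd (Good_inv Gd)) PVe.
    by apply/matrixP => i k; rewrite !mxE mulfV ?(Hnz _ _ Gd).
  - split.
    + by move=> y Hy; exists 0%N.
    + exact: Hvpe.
    + move=> y z /PVj_Good [d [Gd ->]] /PVj_Good [e [Ge ->]].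
      rewrite (Ho _ _ _ _ Gd Ge); apply: Good_PVj.
      by have := Good_mul Gd Ge; rewrite addr0.
    + move=> y /PVj_Good [d [Gd ->]]; exists (yv (fun i => (d i)^-1)).
        by apply: Good_PVj; have := Good_inv Gd; rewrite oppr0.
      rewrite (Ho _ _ _ _ Gd (Good_inv Gd)) PVe.
      by apply/matrixP => i k; rewrite !mxE mulfV ?(Hnz _ _ Gd).
  - move=> j /andP [j1 jl].
    have jl' : (j < l)%N by rewrite -ltnS prednK in jl.
    have Hev : forall k : nat, Defs.eigenvalue A (rho * rootu R l k).
      elim=> [|k IH]; first by exists vp; exact: Hvpe.1.
      apply/(Hsym _).2; exists (rho * rootu R l k) => //.
      by rewrite -addn1 PoszD rootuD [rootu R l k * _]mulrC mulrCA.
    have [y Hy] := PVj_exists (Hev j).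
    exists y; first by exists j.
    move=> z; split.
      case/PVj_Good: Hy => d [Gd ->]; move/PVj_Good => [e [Ge ->]].
      exists (yv (fun i => (d i)^-1 * e i)).
        by apply: Good_PVj; have := Good_mul (Good_inv Gd) Ge; rewrite addNr.
      rewrite (Ho _ _ _ _ Gd (Good_mul (Good_inv Gd) Ge)).
      by apply/matrixP => i k; rewrite !mxE mulVKf ?(Hnz _ _ Gd).
    case=> w /PVj_Good [f [Gf ->]] ->.
    case/PVj_Good: Hy => d [Gd ->].
    rewrite (Ho _ _ _ _ Gd Gf); apply: Good_PVj.
    by have := Good_mul Gd Gf; rewrite addr0.
split.
- move=> y /HPV [j jl [d Gd ->]]; exists j => //.
  rewrite (Dmat_yv (Hn _ _ Gd)); exact: Good_frakD.
- move=> y z /HPV [j _ [d Gd ->]] /HPV [k _ [e Ge ->]].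
  rewrite (Dmat_yv (Hn _ _ Gd)) (Dmat_yv (Hn _ _ Ge)) => E.
  by rewrite -!dg_vp E.
- move=> D [j jl /frakD_Good [d [Gd ->]]]; exists (yv d).
    by exists j => //; exact: Good_PVj.
  exact: Dmat_yv (Hn _ _ Gd).
- move=> y z /HPV [j _ [d Gd ->]] /HPV [k _ [e Ge ->]].
  rewrite (Ho _ _ _ _ Gd Ge) (Dmat_yv (Hn _ _ (Good_mul Gd Ge))).
  rewrite (Dmat_yv (Hn _ _ Gd)) (Dmat_yv (Hn _ _ Ge)).
  by rewrite /dg mulmx_diag; congr diag_mx; apply/rowP => i; rewrite !mxE.
- move=> j jl; split.
  + move=> y /PVj_Good [d [Gd ->]]; rewrite (Dmat_yv (Hn _ _ Gd)).
    exact: Good_frakD.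
  + move=> D /frakD_Good [d [Gd ->]]; exists (yv d); first exact: Good_PVj.
    exact: Dmat_yv (Hn _ _ Gd).
Qed.

End Key.

Theorem lemma3p1 (R : realType) (m n l : nat) (A : tensor R m n)
  (rho : R[i]) (vp : vect R n) :
  (2 <= m)%N -> (0 < l)%N ->
  nonneg_tensor A -> weakly_irreducible A -> spectral_symmetric A l ->
  is_spectral_radius A rho ->
  PVj A rho l 0 vp -> (forall i, 0 < vp i 0) ->
  let PV := PV A rho l in
  let PV0 := PVj A rho l 0 in
  let o := circ vp in
  (* (PV, o) is an abelian group *)
  [/\ (forall y z, PV y -> PV z -> PV (o y z)),
      (forall x y z, PV x -> PV y -> PV z -> o x (o y z) = o (o x y) z),
      (forall y z, PV y -> PV z -> o y z = o z y) &
      exists e, [/\ PV e, (forall y, PV y -> o e y = y),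
        (forall y, PV y -> exists2 z, PV z & o y z = e),
  (* PV_0 is a subgroup *)
        [/\ (forall y, PV0 y -> PV y), PV0 e,
            (forall y z, PV0 y -> PV0 z -> PV0 (o y z)) &
            (forall y, PV0 y -> exists2 z, PV0 z & o y z = e)] &
  (* PV_j is a coset of PV_0 for j in [l-1] *)
        (forall j, (1 <= j <= l.-1)%N ->
           exists2 y, PV y &
             forall z, PVj A rho l j z <-> exists2 w, PV0 w & z = o y w)]] /\
  (* Psi : y |-> D_y is a group isomorphism PV -> frak D *)
  [/\ (forall y, PV y -> frakD_all A l (Dmat y)),
      (forall y z, PV y -> PV z -> Dmat y = Dmat z -> y = z),
      (forall D, frakD_all A l D -> exists2 y, PV y & Dmat y = D),
      (forall y z, PV y -> PV z -> Dmat (o y z) = Dmat y *m Dmat z) &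
  (* Psi maps PV_j onto frak D^{(j)} *)
      (forall j, (j < l)%N ->
         (forall y, PVj A rho l j y -> frakD A l j (Dmat y)) /\
         (forall D, frakD A l j D -> exists2 y, PVj A rho l j y & Dmat y = D))].
Proof.
move=> _ Hl Hnn Hirr Hsym Hrad Hvpe Hvpos.
have Hrho : 0 <= rho by case: Hrad => [[lam _ <-] _]; exact: normr_ge0.
have Hvp i : tapply A vp i = rho * vp i 0 ^+ m.-1.
  by rewrite Hvpe.1.2 /lambda_j rootu0 mulr1.
exact: (main_sec Hnn Hirr Hrho Hvp Hvpos Hvpe.2 Hl Hsym Hvpe).
Qed.
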